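(* An algebra $\langle M,+,\vee,\wedge,0,1,-1\rangle$ (arities $2,2,2,0,0,0$) is isomorphic to a subalgebra of the $\{+,\vee,\wedge,0,1,-1\}$-reduct of some unital commutative lattice-ordered group (with $1$ interpreted as the strong unit and $-1$ as its inverse) if and only if it is a cancellative unital commutative distributive $\ell$-monoid.
   Context: A \emph{unital commutative distributive $\ell$-monoid} is an algebra $\langle M,+,\vee,\wedge,0,1,-1\rangle$ such that: $\langle M,\vee,\wedge\rangle$ is a distributive lattice (with order $\le$); $\langle M,+,0\rangle$ is a commutative monoid; $+$ distributes over $\vee$ and $\wedge$; $-1+1=0$; $-1\le 0\le 1$; and for every $x\in M$ there is $n\in\mathbb{N}\setminus\{0\}$ with $(-1)+\dots+(-1)\le x\le 1+\dots+1$ ($n$ summands each). It is \emph{cancellative} if $x+z=y+z$ implies $x=y$. A unital commutative $\ell$-group is a commutative lattice-ordered group with a strong unit $u\ge 0$ (for every $g$ there is $n$ with $g\le nu$). *)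

(* Defs.v *)
From Stdlib Require Import Arith.

Fixpoint nmul {T : Type} (add : T -> T -> T) (z : T) (n : nat) (a : T) : T :=
  match n with
  | O => z
  | S k => add a (nmul add z k a)
  end.

Definition is_lattice {T : Type} (join meet : T -> T -> T) : Prop :=
  (forall x y z, join x (join y z) = join (join x y) z) /\
  (forall x y z, meet x (meet y z) = meet (meet x y) z) /\
  (forall x y, join x y = join y x) /\
  (forall x y, meet x y = meet y x) /\
  (forall x y, join x (meet x y) = x) /\
  (forall x y, meet x (join x y) = x).

Definition is_distr_lattice {T : Type} (join meet : T -> T -> T) : Prop :=
  is_lattice join meet /\
  (forall x y z, meet x (join y z) = join (meet x y) (meet x z)).

Definition lle {T : Type} (meet : T -> T -> T) (x y : T) : Prop := meet x y = x.

Definition is_com_monoid {T : Type} (add : T -> T -> T) (z : T) : Prop :=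
  (forall x y w, add x (add y w) = add (add x y) w) /\
  (forall x y, add x y = add y x) /\
  (forall x, add z x = x).

Definition is_ucdl_monoid {M : Type} (add join meet : M -> M -> M)
    (zero one mone : M) : Prop :=
  is_distr_lattice join meet /\
  is_com_monoid add zero /\
  (forall x y w, add x (join y w) = join (add x y) (add x w)) /\
  (forall x y w, add x (meet y w) = meet (add x y) (add x w)) /\
  add mone one = zero /\
  lle meet mone zero /\ lle meet zero one /\
  (forall x, exists n, 0 < n /\
     lle meet (nmul add zero n mone) x /\ lle meet x (nmul add zero n one)).

Definition cancellative {M : Type} (add : M -> M -> M) : Prop :=
  forall x y w, add x w = add y w -> x = y.

Definition is_ucl_group {G : Type} (add : G -> G -> G) (opp : G -> G) (zero : G)
    (join meet : G -> G -> G) (u : G) : Prop :=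
  is_com_monoid add zero /\
  (forall x, add (opp x) x = zero) /\
  is_lattice join meet /\
  (forall x y w, lle meet x y -> lle meet (add x w) (add y w)) /\
  lle meet zero u /\
  (forall g, exists n, lle meet g (nmul add zero n u)).

Definition is_embedding {M G : Type}
    (addM joinM meetM : M -> M -> M) (zeroM oneM moneM : M)
    (addG joinG meetG : G -> G -> G) (zeroG oneG moneG : G) (f : M -> G) : Prop :=
  (forall x y, f x = f y -> x = y) /\
  (forall x y, f (addM x y) = addG (f x) (f y)) /\
  (forall x y, f (joinM x y) = joinG (f x) (f y)) /\
  (forall x y, f (meetM x y) = meetG (f x) (f y)) /\
  f zeroM = zeroG /\ f oneM = oneG /\ f moneM = moneG.

(* Main.v *)
From Stdlib Require Import Arith Lia.
From Stdlib Require Import ClassicalEpsilon FunctionalExtensionality PropExtensionality ProofIrrelevance.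
Require Import Defs.

Section CM.
Context {T : Type} (add : T -> T -> T) (z : T) (HC : is_com_monoid add z).
Lemma cmA x y w : add x (add y w) = add (add x y) w. Proof. destruct HC as [A _]; apply A. Qed.
Lemma cmC x y : add x y = add y x. Proof. destruct HC as [_ [C _]]; apply C. Qed.
Lemma cm0l x : add z x = x. Proof. destruct HC as [_ [_ Z]]; apply Z. Qed.
Lemma cm0r x : add x z = x. Proof. rewrite cmC; apply cm0l. Qed.
Lemma cmCA x y w : add x (add y w) = add y (add x w).
Proof. rewrite !cmA, (cmC x y); reflexivity. Qed.
Lemma cm_bubble y r x r2 : r = add x r2 -> add y r = add x (add y r2).
Proof. intros ->; apply cmCA. Qed.
Lemma cm_last y x : add y x = add x y. Proof. apply cmC. Qed.
Lemma nmul_add a b x : nmul add z (a + b) x = add (nmul add z a x) (nmul add z b x).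
Proof. induction a; simpl. rewrite cm0l; auto. rewrite IHa, cmA; auto. Qed.
End CM.

Lemma nmul_hom {A B : Type} (a1 : A -> A -> A) (z1 : A) (a2 : B -> B -> B) (z2 : B)
  (f : A -> B) : f z1 = z2 -> (forall x y, f (a1 x y) = a2 (f x) (f y)) ->
  forall n x, f (nmul a1 z1 n x) = nmul a2 z2 n (f x).
Proof. intros H0 H1 n x; induction n; simpl; auto. rewrite H1, IHn; auto. Qed.

Ltac bubble add HC x :=
  match goal with
  | |- add x _ = add x _ => reflexivity
  | |- add ?y x = add x _ => apply (cm_last add _ HC)
  | |- add ?y _ = add x _ => eapply (cm_bubble add _ HC); bubble add HC x
  end.

Ltac acpeel add HC :=
  match goal with
  | |- ?a = ?a => reflexivity
  | |- add ?x _ = add ?x _ => apply (f_equal (add x)); acpeel add HC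
  | |- add ?x ?r = ?R =>
      let H := fresh in
      eassert (H : R = add x _) by (bubble add HC x);
      rewrite H; clear H; apply (f_equal (add x)); acpeel add HC
  end.
Ltac acsolve add HC := repeat rewrite <- (cmA add _ HC); acpeel add HC.

Section Lat.
Context {T : Type} (j m : T -> T -> T) (HL : is_lattice j m).
Lemma jA x y w : j x (j y w) = j (j x y) w. Proof. destruct HL as [A _]; apply A. Qed.
Lemma mA x y w : m x (m y w) = m (m x y) w. Proof. destruct HL as [_ [A _]]; apply A. Qed.
Lemma jC x y : j x y = j y x. Proof. destruct HL as [_ [_ [A _]]]; apply A. Qed.
Lemma mC x y : m x y = m y x. Proof. destruct HL as [_ [_ [_ [A _]]]]; apply A. Qed.
Lemma jabs x y : j x (m x y) = x. Proof. destruct HL as [_ [_ [_ [_ [A _]]]]]; apply A. Qed.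
Lemma mabs x y : m x (j x y) = x. Proof. destruct HL as [_ [_ [_ [_ [_ A]]]]]; apply A. Qed.
Lemma mid x : m x x = x.
Proof. pose proof (mabs x (m x x)) as E; rewrite jabs in E; exact E. Qed.
Lemma jid x : j x x = x.
Proof. pose proof (jabs x (j x x)) as E; rewrite mabs in E; exact E. Qed.
Lemma jCA x y w : j x (j y w) = j y (j x w).
Proof. rewrite !jA, (jC x y); auto. Qed.
Lemma jjj a b c : j (j a b) (j a c) = j a (j b c).
Proof. rewrite <- jA, (jCA b a c), jA, jid; auto. Qed.
Lemma le_refl x : lle m x x. Proof. apply mid. Qed.
Lemma le_trans x y w : lle m x y -> lle m y w -> lle m x w.
Proof. unfold lle; intros H1 H2. rewrite <- H1 at 1. rewrite <- mA, H2; exact H1. Qed.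
Lemma le_antisym x y : lle m x y -> lle m y x -> x = y.
Proof. unfold lle; intros H1 H2. rewrite <- H1, mC; exact H2. Qed.
Lemma le_join x y : lle m x y -> j x y = y.
Proof. unfold lle; intro H. rewrite <- H, jC, mC, jabs; auto. Qed.
Lemma join_le x y : j x y = y -> lle m x y.
Proof. unfold lle; intro H; rewrite <- H; apply mabs. Qed.
Lemma meet_lb_l x y : lle m (m x y) x.
Proof. unfold lle. rewrite mC, mA, mid; auto. Qed.
Lemma meet_lb_r x y : lle m (m x y) y.
Proof. unfold lle. rewrite <- mA, mid; auto. Qed.
Lemma meet_glb w x y : lle m w x -> lle m w y -> lle m w (m x y).
Proof. unfold lle; intros H1 H2; rewrite mA, H1, H2; auto. Qed.
Lemma join_ub_l x y : lle m x (j x y). Proof. apply mabs. Qed.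
Lemma join_ub_r x y : lle m y (j x y). Proof. unfold lle; rewrite jC; apply mabs. Qed.
Lemma join_lub x y w : lle m x w -> lle m y w -> lle m (j x y) w.
Proof. intros H1 H2; apply join_le. rewrite <- jA, (le_join y w), (le_join x w); auto. Qed.
End Lat.

Section Test.
Context {T : Type} (add : T -> T -> T) (z : T) (HC : is_com_monoid add z).
Goal forall a b c d e, add (add a (add b c)) (add d e) = add e (add (add c a) (add d b)).
Proof. intros. acsolve add HC. Qed.
End Test.

Section Grp.
Context {G : Type} (gadd : G -> G -> G) (gopp : G -> G) (gz : G) (gj gm : G -> G -> G) (u : G)
  (HG : is_ucl_group gadd gopp gz gj gm u).
Lemma gHC : is_com_monoid gadd gz. Proof. destruct HG; auto. Qed.
Lemma gL : is_lattice gj gm. Proof. destruct HG as [_ [_ [H _]]]; auto. Qed.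
Lemma gN x : gadd (gopp x) x = gz. Proof. destruct HG as [_ [H _]]; auto. Qed.
Lemma gNr x : gadd x (gopp x) = gz. Proof. rewrite (cmC _ _ gHC); apply gN. Qed.
Lemma gmono x y w : lle gm x y -> lle gm (gadd x w) (gadd y w).
Proof. destruct HG as [_ [_ [_ [H _]]]]; auto. Qed.
Lemma gu : lle gm gz u. Proof. destruct HG as [_ [_ [_ [_ [H _]]]]]; auto. Qed.
Lemma gsu g : exists n, lle gm g (nmul gadd gz n u). Proof. destruct HG as [_ [_ [_ [_ [_ H]]]]]; auto. Qed.
Lemma addK x w : gadd (gadd x w) (gopp w) = x.
Proof. rewrite <- (cmA _ _ gHC), gNr, (cm0r _ _ gHC); auto. Qed.
Lemma addNK x w : gadd (gadd x (gopp w)) w = x.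
Proof. rewrite <- (cmA _ _ gHC), gN, (cm0r _ _ gHC); auto. Qed.
Lemma gcancel x y w : gadd x w = gadd y w -> x = y.
Proof. intro H. rewrite <- (addK x w), <- (addK y w), H; auto. Qed.
Lemma gle_cancel x y w : lle gm (gadd x w) (gadd y w) -> lle gm x y.
Proof. intro H. apply (gmono _ _ (gopp w)) in H. rewrite !addK in H; auto. Qed.

Lemma gjoin_add x y w : gadd (gj x y) w = gj (gadd x w) (gadd y w).
Proof.
  apply (le_antisym _ _ gL).
  - apply (gle_cancel _ _ (gopp w)). rewrite addK.
    apply (join_lub _ _ gL).
    + rewrite <- (addK x w) at 1. apply gmono, (join_ub_l _ _ gL).
    + rewrite <- (addK y w) at 1. apply gmono, (join_ub_r _ _ gL).
  - apply (join_lub _ _ gL); apply gmono; [apply (join_ub_l _ _ gL)|apply (join_ub_r _ _ gL)].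
Qed.
Lemma gmeet_add x y w : gadd (gm x y) w = gm (gadd x w) (gadd y w).
Proof.
  apply (le_antisym _ _ gL).
  - apply (meet_glb _ _ gL); apply gmono; [apply (meet_lb_l _ _ gL)|apply (meet_lb_r _ _ gL)].
  - apply (gle_cancel _ _ (gopp w)). rewrite addK.
    apply (meet_glb _ _ gL).
    + rewrite <- (addK x w) at 2. apply gmono, (meet_lb_l _ _ gL).
    + rewrite <- (addK y w) at 2. apply gmono, (meet_lb_r _ _ gL).
Qed.

Lemma grev x y c : lle gm x y -> lle gm (gadd c (gopp y)) (gadd c (gopp x)).
Proof.
  intro H. apply (gmono _ _ (gadd c (gadd (gopp x) (gopp y)))) in H.
  replace (gadd x (gadd c (gadd (gopp x) (gopp y)))) with (gadd c (gopp y)) in H.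
  replace (gadd y (gadd c (gadd (gopp x) (gopp y)))) with (gadd c (gopp x)) in H. auto.
  - transitivity (gadd (gadd c (gopp x)) (gadd y (gopp y))).
    rewrite gNr, (cm0r _ _ gHC); auto. acsolve gadd gHC.
  - transitivity (gadd (gadd c (gopp y)) (gadd x (gopp x))).
    rewrite gNr, (cm0r _ _ gHC); auto. acsolve gadd gHC.
Qed.

Lemma gmj x y : gadd (gm x y) (gj x y) = gadd x y.
Proof.
  set (s := gadd x y).
  assert (E : gm x y = gadd s (gopp (gj x y))).
  { apply (le_antisym _ _ gL).
    - apply (gle_cancel _ _ (gj x y)). rewrite addNK.
      assert (H1 : lle gm (gj x y) (gadd s (gopp (gm x y)))).
      { apply (join_lub _ _ gL).
        - replace x with (gadd s (gopp y)) at 1 by (unfold s; apply addK).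
          apply grev, (meet_lb_r _ _ gL).
        - replace y with (gadd s (gopp x)) at 1 by (unfold s; rewrite (cmC _ _ gHC x y); apply addK).
          apply grev, (meet_lb_l _ _ gL). }
      apply (gmono _ _ (gm x y)) in H1. rewrite addNK in H1.
      rewrite (cmC _ _ gHC). exact H1.
    - apply (meet_glb _ _ gL).
      + replace x with (gadd s (gopp y)) at 2 by (unfold s; apply addK).
        apply grev, (join_ub_r _ _ gL).
      + replace y with (gadd s (gopp x)) at 2 by (unfold s; rewrite (cmC _ _ gHC x y); apply addK).
        apply grev, (join_ub_l _ _ gL). }
  rewrite E. apply addNK.
Qed.

Lemma gdistr x y w : gm x (gj y w) = gj (gm x y) (gm x w).
Proof.
  set (d := gm x (gj y w)). set (e := gj (gm x y) (gm x w)).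
  assert (Hdyz : lle gm d (gj y w)) by apply (meet_lb_r _ _ gL).
  assert (Hed : lle gm e d).
  { apply (join_lub _ _ gL); apply (meet_glb _ _ gL).
    apply (meet_lb_l _ _ gL). eapply (le_trans _ _ gL). apply (meet_lb_r _ _ gL). apply (join_ub_l _ _ gL).
    apply (meet_lb_l _ _ gL). eapply (le_trans _ _ gL). apply (meet_lb_r _ _ gL). apply (join_ub_r _ _ gL). }
  assert (Hex : lle gm e x) by (eapply (le_trans _ _ gL); [exact Hed| apply (meet_lb_l _ _ gL)]).
  assert (Hdx : lle gm d x) by apply (meet_lb_l _ _ gL).
  assert (K : forall v, gm d v = gm x v -> gm e v = gm x v ->
     gj d v = gadd (gj e v) (gadd d (gopp e))).
  { intros v Hd He.
    pose proof (gmj d v) as E1. pose proof (gmj e v) as E2.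
    rewrite Hd in E1. rewrite He in E2.
    apply (gcancel _ _ (gadd e (gm x v))).
    transitivity (gadd (gadd (gm x v) (gj d v)) e). acsolve gadd gHC.
    rewrite E1.
    transitivity (gadd (gadd (gadd (gm x v) (gj e v)) d) (gadd e (gopp e))).
    2: acsolve gadd gHC.
    rewrite E2, gNr, (cm0r _ _ gHC). acsolve gadd gHC. }
  assert (Ky : gj d y = gadd (gj e y) (gadd d (gopp e))).
  { apply K.
    - apply (le_antisym _ _ gL).
      + apply (meet_glb _ _ gL). eapply (le_trans _ _ gL). apply (meet_lb_l _ _ gL). auto. apply (meet_lb_r _ _ gL).
      + apply (meet_glb _ _ gL). apply (meet_glb _ _ gL). apply (meet_lb_l _ _ gL).
        eapply (le_trans _ _ gL). apply (meet_lb_r _ _ gL). apply (join_ub_l _ _ gL). apply (meet_lb_r _ _ gL).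
    - apply (le_antisym _ _ gL).
      + apply (meet_glb _ _ gL). eapply (le_trans _ _ gL). apply (meet_lb_l _ _ gL). auto. apply (meet_lb_r _ _ gL).
      + apply (meet_glb _ _ gL). apply (join_ub_l _ _ gL). apply (meet_lb_r _ _ gL). }
  assert (Kz : gj d w = gadd (gj e w) (gadd d (gopp e))).
  { apply K.
    - apply (le_antisym _ _ gL).
      + apply (meet_glb _ _ gL). eapply (le_trans _ _ gL). apply (meet_lb_l _ _ gL). auto. apply (meet_lb_r _ _ gL).
      + apply (meet_glb _ _ gL). apply (meet_glb _ _ gL). apply (meet_lb_l _ _ gL).
        eapply (le_trans _ _ gL). apply (meet_lb_r _ _ gL). apply (join_ub_r _ _ gL). apply (meet_lb_r _ _ gL).
    - apply (le_antisym _ _ gL).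
      + apply (meet_glb _ _ gL). eapply (le_trans _ _ gL). apply (meet_lb_l _ _ gL). auto. apply (meet_lb_r _ _ gL).
      + apply (meet_glb _ _ gL). apply (join_ub_r _ _ gL). apply (meet_lb_r _ _ gL). }
  assert (Hey : lle gm e (gj y w)) by exact (le_trans _ _ gL _ _ _ Hed Hdyz).
  assert (J : gj (gj d y) (gj d w) = gj (gj e y) (gj e w)).
  { transitivity (gj y w).
    - rewrite (jjj _ _ gL). apply (le_join _ _ gL); auto.
    - rewrite (jjj _ _ gL). symmetry; apply (le_join _ _ gL); auto. }
  rewrite Ky, Kz, <- gjoin_add in J.
  rewrite <- (cm0r _ _ gHC (gj (gj e y) (gj e w))) in J at 2.
  rewrite (cmC _ _ gHC _ gz), (cmC _ _ gHC _ (gadd d (gopp e))) in J.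
  apply gcancel in J.
  rewrite <- (addNK d e), J, (cm0l _ _ gHC). auto.
Qed.

Lemma gnmul_nonneg x n : lle gm gz x -> lle gm gz (nmul gadd gz n x).
Proof.
  intro H; induction n; simpl. apply (le_refl _ _ gL).
  eapply (le_trans _ _ gL). exact IHn.
  rewrite <- (cm0l _ _ gHC (nmul gadd gz n x)) at 1. apply gmono; auto.
Qed.
Lemma gnmul_nonpos x n : lle gm x gz -> lle gm (nmul gadd gz n x) gz.
Proof.
  intro H; induction n; simpl. apply (le_refl _ _ gL).
  eapply (le_trans _ _ gL). 2: exact IHn.
  rewrite <- (cm0l _ _ gHC (nmul gadd gz n x)) at 2. apply gmono; auto.
Qed.
Lemma gnmul_opp n x : gadd (nmul gadd gz n (gopp x)) (nmul gadd gz n x) = gz.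
Proof.
  induction n; simpl. apply (cm0l _ _ gHC).
  transitivity (gadd (gadd (gopp x) x) (gadd (nmul gadd gz n (gopp x)) (nmul gadd gz n x))).
  acsolve gadd gHC. rewrite IHn, gN, (cm0l _ _ gHC); auto.
Qed.

Lemma gbound g : exists n, 0 < n /\ lle gm (nmul gadd gz n (gopp u)) g /\ lle gm g (nmul gadd gz n u).
Proof.
  destruct (gsu g) as [k Hk]. destruct (gsu (gopp g)) as [m Hm].
  exists (S (k + m)). split. lia. split.
  - eapply (le_trans _ _ gL).
    2: { apply (gmono _ _ (gadd g (nmul gadd gz m (gopp u)))) in Hm.
         rewrite (cmA _ _ gHC), gN, (cm0l _ _ gHC) in Hm.
         rewrite (cmCA _ _ gHC), (cmC _ _ gHC (nmul gadd gz m u)), gnmul_opp, (cm0r _ _ gHC) in Hm.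
         exact Hm. }
    replace (S (k + m)) with (S k + m) by lia. rewrite (nmul_add _ _ gHC).
    rewrite <- (cm0l _ _ gHC (nmul gadd gz m (gopp u))) at 2. apply gmono.
    apply gnmul_nonpos. apply (gle_cancel _ _ u). rewrite gN, (cm0l _ _ gHC). apply gu.
  - eapply (le_trans _ _ gL). exact Hk.
    replace (S (k + m)) with (k + S m) by lia. rewrite (nmul_add _ _ gHC).
    rewrite <- (cm0r _ _ gHC (nmul gadd gz k u)) at 1.
    rewrite !(cmC _ _ gHC (nmul gadd gz k u)). apply gmono. apply gnmul_nonneg, gu.
Qed.
End Grp.

Lemma dir1 (M : Type) (add join meet : M -> M -> M) (zero one mone : M)
  (G : Type) (gadd : G -> G -> G) (gopp : G -> G) (gzero : G)
  (gjoin gmeet : G -> G -> G) (u : G) (f : M -> G) :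
  is_ucl_group gadd gopp gzero gjoin gmeet u ->
  is_embedding add join meet zero one mone gadd gjoin gmeet gzero u (gopp u) f ->
  is_ucdl_monoid add join meet zero one mone /\ cancellative add.
Proof.
  intros HG [Finj [Fadd [Fj [Fm [F0 [F1 Fm1]]]]]].
  pose proof (gHC _ _ _ _ _ _ HG) as HC. pose proof (gL _ _ _ _ _ _ HG) as HL.
  destruct HC as [CA [CC C0]]. destruct HL as [LA1 [LA2 [LC1 [LC2 [LB1 LB2]]]]].
  split; [|intros x y w H; apply Finj, (gcancel _ _ _ _ _ _ HG _ _ (f w)); rewrite <- !Fadd, H; auto].
  repeat split.
  all: try (intros; apply Finj; rewrite ?Fadd, ?Fj, ?Fm, ?Fadd, ?Fj, ?Fm, ?Fadd, ?Fj, ?Fm; auto; fail).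
  - intros; apply Finj; rewrite !Fm, !Fj, !Fm. apply (gdistr _ _ _ _ _ _ HG).
  - intros; apply Finj; rewrite !Fadd, F0; auto.
  - intros; apply Finj; rewrite !Fadd, !Fj, !Fadd, !(CC (f x)). apply (gjoin_add _ _ _ _ _ _ HG).
  - intros; apply Finj; rewrite !Fadd, !Fm, !Fadd, !(CC (f x)). apply (gmeet_add _ _ _ _ _ _ HG).
  - apply Finj; rewrite Fadd, Fm1, F1, F0. apply (gN _ _ _ _ _ _ HG).
  - unfold lle. apply Finj; rewrite Fm, Fm1, F0.
    apply (gle_cancel _ _ _ _ _ _ HG _ _ u). rewrite (gN _ _ _ _ _ _ HG), C0. apply (gu _ _ _ _ _ _ HG).
  - unfold lle. apply Finj; rewrite Fm, F1, F0. apply (gu _ _ _ _ _ _ HG).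
  - intros x. destruct (gbound _ _ _ _ _ _ HG (f x)) as [n [Hn [H1 H2]]].
    exists n. split; auto.
    assert (Hf : forall k a, f (nmul add zero k a) = nmul gadd gzero k (f a)) by (apply nmul_hom; auto).
    unfold lle in *. split; apply Finj; rewrite Fm, Hf; [rewrite Fm1|rewrite F1]; auto.
Qed.

Section Constr.
Context {M : Type} (add join meet : M -> M -> M) (zero one mone : M)
  (Hm : is_ucdl_monoid add join meet zero one mone) (Hc : cancellative add).

Lemma mHC : is_com_monoid add zero. Proof. destruct Hm as [_ [H _]]; auto. Qed.
Lemma mHL : is_lattice join meet. Proof. destruct Hm as [[H _] _]; auto. Qed.
Lemma mAJ x y w : add x (join y w) = join (add x y) (add x w). Proof. destruct Hm as [_ [_ [H _]]]; auto. Qed.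
Lemma mAM x y w : add x (meet y w) = meet (add x y) (add x w). Proof. destruct Hm as [_ [_ [_ [H _]]]]; auto. Qed.
Lemma mAJr x y w : add (join y w) x = join (add y x) (add w x).
Proof. rewrite !(cmC _ _ mHC _ x); apply mAJ. Qed.
Lemma mAMr x y w : add (meet y w) x = meet (add y x) (add w x).
Proof. rewrite !(cmC _ _ mHC _ x); apply mAM. Qed.
Lemma mInv : add mone one = zero. Proof. destruct Hm as [_ [_ [_ [_ [H _]]]]]; auto. Qed.
Lemma mBd x : exists n, 0 < n /\ lle meet (nmul add zero n mone) x /\ lle meet x (nmul add zero n one).
Proof. destruct Hm as [_ [_ [_ [_ [_ [_ [_ H]]]]]]]; auto. Qed.
Lemma mmono x y w : lle meet x y -> lle meet (add x w) (add y w).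
Proof. unfold lle; intro H. rewrite <- mAMr, H; auto. Qed.

Definition PT := (M * M)%type.
Definition eqv (p q : PT) : Prop := add (fst p) (snd q) = add (fst q) (snd p).
Lemma eqv_refl p : eqv p p. Proof. reflexivity. Qed.
Lemma eqv_sym p q : eqv p q -> eqv q p. Proof. unfold eqv; auto. Qed.
Lemma eqv_trans p q r : eqv p q -> eqv q r -> eqv p r.
Proof.
  destruct p as [a b], q as [c d], r as [e f]; unfold eqv; simpl; intros H1 H2.
  apply (Hc _ _ d).
  transitivity (add (add a d) f). acsolve add mHC.
  rewrite H1.
  transitivity (add (add c f) b). acsolve add mHC.
  rewrite H2. acsolve add mHC.
Qed.

Definition GT := {R : PT -> Prop | exists p, R = eqv p}.
Definition cls (p : PT) : GT := exist _ (eqv p) (ex_intro _ p eq_refl).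
Lemma cls_eq p q : eqv p q -> cls p = cls q.
Proof.
  intro H. unfold cls. apply subset_eq_compat.
  extensionality r. apply propositional_extensionality. split; intro H'.
  - eapply eqv_trans. apply eqv_sym; exact H. exact H'.
  - eapply eqv_trans. exact H. exact H'.
Qed.
Lemma cls_inj p q : cls p = cls q -> eqv p q.
Proof.
  intro H. apply (f_equal (@proj1_sig _ _)) in H. simpl in H.
  apply (f_equal (fun R => R q)) in H. rewrite H. apply eqv_refl.
Qed.
Definition rep (x : GT) : PT := proj1_sig (constructive_indefinite_description _ (proj2_sig x)).
Lemma cls_rep x : cls (rep x) = x.
Proof.
  unfold rep. destruct (constructive_indefinite_description _ _) as [p Hp]. simpl.
  destruct x as [R HR]. unfold cls. apply subset_eq_compat. simpl in Hp. auto.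
Qed.
Lemma surj x : exists p, x = cls p. Proof. exists (rep x); symmetry; apply cls_rep. Qed.
Lemma rep_cls p : eqv (rep (cls p)) p. Proof. apply cls_inj, cls_rep. Qed.

Definition lift2 (op : PT -> PT -> PT) (x y : GT) : GT := cls (op (rep x) (rep y)).
Definition lift1 (op : PT -> PT) (x : GT) : GT := cls (op (rep x)).
Definition resp2 (op : PT -> PT -> PT) :=
  forall p p' q q', eqv p p' -> eqv q q' -> eqv (op p q) (op p' q').
Lemma lift2_cls op (H : resp2 op) p q : lift2 op (cls p) (cls q) = cls (op p q).
Proof. apply cls_eq, H; apply rep_cls. Qed.
Lemma lift1_cls op (H : forall p p', eqv p p' -> eqv (op p) (op p')) p : lift1 op (cls p) = cls (op p).
Proof. apply cls_eq, H; apply rep_cls. Qed.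
Lemma resp_left op (L : forall p p' q, eqv p p' -> eqv (op p q) (op p' q))
  (C : forall p q, op p q = op q p) : resp2 op.
Proof.
  intros p p' q q' H1 H2. eapply eqv_trans. apply L, H1. rewrite (C p' q), (C p' q'). apply L, H2.
Qed.

Definition padd (p q : PT) : PT := (add (fst p) (fst q), add (snd p) (snd q)).
Definition pjoin (p q : PT) : PT := (join (add (fst p) (snd q)) (add (fst q) (snd p)), add (snd p) (snd q)).
Definition pmeet (p q : PT) : PT := (meet (add (fst p) (snd q)) (add (fst q) (snd p)), add (snd p) (snd q)).
Definition popp (p : PT) : PT := (snd p, fst p).

Lemma padd_resp : resp2 padd.
Proof.
  apply resp_left.
  - intros [a b] [a' b'] [c d]; unfold eqv, padd; simpl; intro H.
    transitivity (add (add a b') (add c d)). acsolve add mHC. rewrite H. acsolve add mHC.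
  - intros [a b] [c d]; unfold padd; simpl. rewrite (cmC _ _ mHC a), (cmC _ _ mHC b); auto.
Qed.
Lemma pjoin_resp : resp2 pjoin.
Proof.
  apply resp_left.
  - intros [a b] [a' b'] [c d]; unfold eqv, pjoin; simpl; intro H.
    rewrite !mAJr. f_equal.
    + transitivity (add (add a b') (add d d)). acsolve add mHC. rewrite H. acsolve add mHC.
    + acsolve add mHC.
  - intros [a b] [c d]; unfold pjoin; simpl. rewrite (jC _ _ mHL), (cmC _ _ mHC b); auto.
Qed.
Lemma pmeet_resp : resp2 pmeet.
Proof.
  apply resp_left.
  - intros [a b] [a' b'] [c d]; unfold eqv, pmeet; simpl; intro H.
    rewrite !mAMr. f_equal.
    + transitivity (add (add a b') (add d d)). acsolve add mHC. rewrite H. acsolve add mHC.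
    + acsolve add mHC.
  - intros [a b] [c d]; unfold pmeet; simpl. rewrite (mC _ _ mHL), (cmC _ _ mHC b); auto.
Qed.
Lemma popp_resp p p' : eqv p p' -> eqv (popp p) (popp p').
Proof. destruct p as [a b], p' as [c d]; unfold eqv, popp; simpl; intro H.
  rewrite (cmC _ _ mHC b), (cmC _ _ mHC d); auto. Qed.

Definition Gadd := lift2 padd.
Definition Gjoin := lift2 pjoin.
Definition Gmeet := lift2 pmeet.
Definition Gopp := lift1 popp.
Definition Gzero := cls (zero, zero).
Definition Gu := cls (one, zero).
Definition femb (x : M) : GT := cls (x, zero).

Lemma Gadd_cls p q : Gadd (cls p) (cls q) = cls (padd p q). Proof. apply lift2_cls, padd_resp. Qed.
Lemma Gjoin_cls p q : Gjoin (cls p) (cls q) = cls (pjoin p q). Proof. apply lift2_cls, pjoin_resp. Qed.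
Lemma Gmeet_cls p q : Gmeet (cls p) (cls q) = cls (pmeet p q). Proof. apply lift2_cls, pmeet_resp. Qed.
Lemma Gopp_cls p : Gopp (cls p) = cls (popp p). Proof. apply lift1_cls, popp_resp. Qed.

Ltac des x := let a := fresh "a" in let b := fresh "b" in destruct (surj x) as [[a b] ->].
Ltac gsimp := rewrite ?Gadd_cls, ?Gjoin_cls, ?Gmeet_cls, ?Gopp_cls, ?Gadd_cls, ?Gjoin_cls, ?Gmeet_cls,
   ?Gadd_cls, ?Gjoin_cls, ?Gmeet_cls; unfold padd, pjoin, pmeet, popp; simpl.

Lemma G_cm : is_com_monoid Gadd Gzero.
Proof.
  repeat split.
  - intros x y w; des x; des y; des w; unfold Gzero; gsimp. rewrite !(cmA _ _ mHC); auto.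
  - intros x y; des x; des y; gsimp. rewrite (cmC _ _ mHC a), (cmC _ _ mHC b); auto.
  - intros x; des x; unfold Gzero; gsimp. rewrite !(cm0l _ _ mHC); auto.
Qed.

Lemma G_lat : is_lattice Gjoin Gmeet.
Proof.
  repeat split.
  - intros x y w; des x; des y; des w; gsimp. f_equal. f_equal. 2: acsolve add mHC.
    rewrite !mAJr, (jA _ _ mHL). f_equal; [f_equal|]; acsolve add mHC.
  - intros x y w; des x; des y; des w; gsimp. f_equal. f_equal. 2: acsolve add mHC.
    rewrite !mAMr, (mA _ _ mHL). f_equal; [f_equal|]; acsolve add mHC.
  - intros x y; des x; des y; gsimp. rewrite (jC _ _ mHL), (cmC _ _ mHC b); auto.
  - intros x y; des x; des y; gsimp. rewrite (mC _ _ mHL), (cmC _ _ mHC b); auto.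
  - intros x y; des x; des y; gsimp. apply cls_eq; unfold eqv; simpl.
    rewrite mAMr. replace (add (add a b0) b) with (add a (add b b0)) by acsolve add mHC.
    rewrite (jabs _ _ mHL). acsolve add mHC.
  - intros x y; des x; des y; gsimp. apply cls_eq; unfold eqv; simpl.
    rewrite mAJr. replace (add (add a b0) b) with (add a (add b b0)) by acsolve add mHC.
    rewrite (mabs _ _ mHL). acsolve add mHC.
Qed.

Lemma G_madd x y w : Gadd (Gmeet x y) w = Gmeet (Gadd x w) (Gadd y w).
Proof.
  des x; des y; des w; gsimp. apply cls_eq; unfold eqv; simpl.
  rewrite !mAMr. f_equal; acsolve add mHC.
Qed.

Lemma nmul_G n : nmul Gadd Gzero n Gu = cls (nmul add zero n one, zero).
Proof.
  induction n; simpl. reflexivity.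
  rewrite IHn. unfold Gu. gsimp. rewrite (cm0l _ _ mHC). auto.
Qed.

Lemma nmul_inv n : add (nmul add zero n mone) (nmul add zero n one) = zero.
Proof.
  induction n; simpl. apply (cm0l _ _ mHC).
  transitivity (add (add mone one) (add (nmul add zero n mone) (nmul add zero n one))).
  acsolve add mHC. rewrite IHn, mInv, (cm0l _ _ mHC); auto.
Qed.

Lemma construct : exists (G : Type) (gadd : G -> G -> G) (gopp : G -> G) (gzero : G)
          (gjoin gmeet : G -> G -> G) (u : G) (f : M -> G),
      is_ucl_group gadd gopp gzero gjoin gmeet u /\
      is_embedding add join meet zero one mone gadd gjoin gmeet gzero u (gopp u) f.
Proof.
  exists GT, Gadd, Gopp, Gzero, Gjoin, Gmeet, Gu, femb.
  split; [split; [apply G_cm|split; [|split; [apply G_lat|split; [|split]]]]|].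
  - intros x; des x; unfold Gzero; gsimp. apply cls_eq; unfold eqv; simpl.
    rewrite (cm0l _ _ mHC), (cm0r _ _ mHC). apply (cmC _ _ mHC).
  - intros x y w H. unfold lle in *. rewrite <- G_madd, H; auto.
  - unfold lle, Gzero, Gu; gsimp. apply cls_eq; unfold eqv; simpl.
    rewrite !(cm0r _ _ mHC). destruct Hm as [_ [_ [_ [_ [_ [_ [H _]]]]]]]. exact H.
  - intros g. des g. destruct (mBd a) as [k [_ [_ Hk]]]. destruct (mBd b) as [m [_ [Hm' _]]].
    exists (k + m). rewrite nmul_G. unfold lle. gsimp. apply cls_eq; unfold eqv; simpl.
    rewrite (cm0r _ _ mHC).
    assert (Hle : lle meet a (add (nmul add zero (k + m) one) b)).
    { eapply (le_trans _ _ mHL). exact Hk.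
      rewrite (nmul_add _ _ mHC).
      apply (mmono _ _ (add (nmul add zero k one) (nmul add zero m one))) in Hm'.
      replace (add (nmul add zero m mone) (add (nmul add zero k one) (nmul add zero m one)))
        with (nmul add zero k one) in Hm'.
      replace (add (add (nmul add zero k one) (nmul add zero m one)) b)
        with (add b (add (nmul add zero k one) (nmul add zero m one))) by acsolve add mHC.
      exact Hm'.
      transitivity (add (nmul add zero k one) (add (nmul add zero m mone) (nmul add zero m one))).
      rewrite nmul_inv, (cm0r _ _ mHC); auto. acsolve add mHC. }
    unfold lle in Hle. rewrite Hle, (cm0r _ _ mHC); auto.
  - repeat split.
    + intros x y H. apply cls_inj in H. unfold eqv in H; simpl in H.
      rewrite !(cm0r _ _ mHC) in H. auto.
    + intros; unfold femb; gsimp; rewrite (cm0l _ _ mHC); auto.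
    + intros; unfold femb; gsimp; rewrite !(cm0l _ _ mHC), !(cm0r _ _ mHC); auto.
    + intros; unfold femb; gsimp; rewrite !(cm0l _ _ mHC), !(cm0r _ _ mHC); auto.
    + unfold Gopp, Gu, femb. rewrite lift1_cls by apply popp_resp. apply cls_eq; unfold eqv; simpl.
      rewrite mInv; symmetry; apply (cm0l _ _ mHC).
Qed.
End Constr.

Theorem mainTheorem3 (M : Type) (add join meet : M -> M -> M) (zero one mone : M) :
  (exists (G : Type) (gadd : G -> G -> G) (gopp : G -> G) (gzero : G)
          (gjoin gmeet : G -> G -> G) (u : G) (f : M -> G),
      is_ucl_group gadd gopp gzero gjoin gmeet u /\
      is_embedding add join meet zero one mone gadd gjoin gmeet gzero u (gopp u) f)
  <->
  (is_ucdl_monoid add join meet zero one mone /\ cancellative add).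
Proof.
  split.
  - intros [G [gadd [gopp [gzero [gjoin [gmeet [u [f [H1 H2]]]]]]]]].
    eapply dir1; eauto.
  - intros [H1 H2]. apply construct; auto.
Qed.
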